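(* For every $\eta,\varepsilon\in(0,1/3]$ (and $d\in\mathbb{N}$) there is $N=N(\eta,\varepsilon)\in\mathbb{N}$ such that for infinitely many $m\in\mathbb{N}$ the following holds: there exists a set $B\subset\{-m,\dots,m-1\}^d$ with $|B|\le\eta m^d$ such that $$\bigl|(A+B)\cap[m]^d\bigr|\ge(1-\varepsilon)m^d\quad\text{for all }A\subset[m]^d\text{ with }|A|\ge N,$$ where sums are taken in $\mathbb{Z}^d$.
   Context: $[m]=\{0,1,\dots,m-1\}$; $|\cdot|$ denotes cardinality. *)

(* Defs.v *)
From HB Require Import structures.
From mathcomp Require Import all_boot all_order all_algebra.
From mathcomp Require Import reals.
Set Implicit Arguments. Unset Strict Implicit. Unset Printing Implicit Defensive.
Import Order.TTheory GRing.Theory Num.Theory.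

Definition cube (d m : nat) : finType := {ffun 'I_d -> 'I_m}.

(* The shifted cube {-m,...,m-1}^d is encoded by {ffun 'I_d -> 'I_(2*m)}:
   a point b stands for the integer vector (i |-> b i - m). *)
Definition scube (d m : nat) : finType := {ffun 'I_d -> 'I_(2 * m)}.

Definition scube_val d m (b : scube d m) (i : 'I_d) : int :=
  (nat_of_ord (b i))%:Z - m%:Z.

Definition sumset_cap_cube d m (A : {set cube d m}) (B : {set scube d m})
  : {set cube d m} :=
  [set x : cube d m | [exists a in A, exists b in B,
     [forall i : 'I_d, ((nat_of_ord (x i))%:Z == (nat_of_ord (a i))%:Z + scube_val b i)%R]]].

(* Main.v *)
Require Import Defs.
From mathcomp Require Import all_boot all_order all_algebra.
From mathcomp Require Import zify ring lra.
From mathcomp Require Import reals.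
From HB Require Import structures.
Set Implicit Arguments. Unset Strict Implicit. Unset Printing Implicit Defensive.
Import Order.TTheory GRing.Theory Num.Theory.

Lemma card_R1 n c (H : (c <= n)%N) : #|[set r : 'I_n | (r < c)%N]| = c.
Proof.
have -> : [set r : 'I_n | (r < c)%N] = widen_ord H @: [set: 'I_c].
  apply/setP => r; rewrite inE; apply/idP/imsetP.
    by move=> Hr; exists (Ordinal Hr) => //; apply: val_inj.
  by case=> j _ ->; rewrite /= ltn_ord.
rewrite card_imset ?cardsT ?card_ord //.
by move=> a b /(congr1 val) /= ?; exact: val_inj.
Qed.


Lemma sq_sum_le (G : finType) (U : {set G}) (r : G -> nat) :
  (\sum_(z in U) r z) ^ 2 <= #|U| * \sum_(z in U) r z ^ 2.
Proof.
set S2 := \sum_(z in U) r z ^ 2.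
have E : \sum_(z in U) \sum_(z' in U) (r z ^ 2 + r z' ^ 2) = 2 * (#|U| * S2).
  rewrite (eq_bigr (fun z => #|U| * r z ^ 2 + S2)); last first.
    by move=> z _; rewrite big_split /= sum_nat_const.
  by rewrite big_split /= sum_nat_const -big_distrr /= -/S2 mulnC; lia.
have H : 2 * (\sum_(z in U) r z) ^ 2 <= 2 * (#|U| * S2).
  rewrite -E -mulnn big_distrl /= big_distrr /=.
  apply: leq_sum => z _; rewrite big_distrr /= big_distrr /=; apply: leq_sum => z' _.
  exact: (nat_Cauchy _ _).1.
by rewrite leq_pmul2l in H.
Qed.

Lemma alg_aux (a X Y U : nat) : a <= X -> X ^ 2 <= U * (X + Y) -> a ^ 2 <= U * (a + Y).
Proof.
move=> h1 h2.
have h3 : a ^ 2 * (X + Y) <= X ^ 2 * (a + Y).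
  have : a * a * X <= X * X * a by rewrite -mulnA [a*X]mulnC mulnA leq_mul2r leq_mul ?orbT.
  have : a * a * Y <= X * X * Y by rewrite leq_mul2r leq_mul ?orbT.
  nia.
case: (posnP (X + Y)) => hXY.
  have : X = 0 by lia.
  move=> hX; have : a = 0 by lia.
  by move=> ->.
have h4 : a ^ 2 * (X + Y) <= U * (a + Y) * (X + Y).
  apply: leq_trans h3 _; rewrite [U * _ * _]mulnAC; apply: leq_mul => //.
by rewrite leq_pmul2r in h4.
Qed.

Lemma cs_cover (I G : finType) (V : {set I}) (S : I -> {set G}) k lam :
  (forall v, v \in V -> k <= #|S v|) ->
  (forall v w, v \in V -> w \in V -> v != w -> #|S v :&: S w| <= lam) ->
  (#|V| * k) ^ 2 <= #|\bigcup_(v in V) S v| * (#|V| * k + #|V| ^ 2 * lam).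
Proof.
move=> Hk Hl.
set U := \bigcup_(v in V) S v.
pose r z := \sum_(v in V) (z \in S v : nat).
set X := \sum_(v in V) #|S v|.
have E1 : \sum_(z in U) r z = X.
  rewrite /X (eq_bigr (fun v => \sum_(z in U) (z \in S v : nat))); last first.
    move=> v Hv; rewrite -sum1_card big_mkcond /= [RHS]big_mkcond /=.
    apply: eq_bigr => z _; case: ifP => // Hz; case: ifP => // HU.
    have : z \in U by apply/bigcupP; exists v.
    by rewrite HU.
  by rewrite exchange_big.
have E2 : \sum_(z in U) r z ^ 2 <= X + #|V| ^ 2 * lam.
  have -> : \sum_(z in U) r z ^ 2 = \sum_(v in V) \sum_(w in V) #|S v :&: S w|.
    have -> : \sum_(z in U) r z ^ 2 = \sum_z r z ^ 2.
      rewrite [RHS](bigID (mem U)) /= [X in _ + X]big1 ?addn0 // => z Hz.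
      suff -> : r z = 0 by [].
      apply: big1 => v Hv; case Hzv: (z \in S v) => //.
      by case/negP: Hz; apply/bigcupP; exists v.
    rewrite (eq_bigr (fun z => \sum_(v in V) \sum_(w in V) (z \in S v :&: S w : nat))); last first.
      move=> z _; rewrite /r -mulnn big_distrl /=; apply: eq_bigr => v _.
      rewrite big_distrr /=; apply: eq_bigr => w _.
      by rewrite inE; case: (z \in S v); case: (z \in S w).
    rewrite exchange_big /=; apply: eq_bigr => v _; rewrite exchange_big /=.
    apply: eq_bigr => w _; rewrite -sum1_card [RHS]big_mkcond /=.
    by apply: eq_bigr.
  rewrite /X -mulnn -mulnA -sum_nat_const -big_split /=.
  apply: leq_sum => v Hv; rewrite (bigD1 v) //= setIid leq_add2l.
  apply: (@leq_trans (\sum_(w in V | w != v) lam)).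
    by apply: leq_sum => w /andP[Hw Hne]; apply: Hl => //; rewrite eq_sym.
  rewrite sum_nat_const leq_mul2r; apply/orP; right.
  by apply: subset_leq_card; apply/subsetP => w /andP[].
have XK : #|V| * k <= X.
  by rewrite -sum_nat_const /X; apply: leq_sum.
have CS := sq_sum_le U r; rewrite E1 in CS.
apply: (alg_aux XK); apply: leq_trans CS _.
by rewrite leq_mul2l E2 orbT.
Qed.


Lemma card_coord (T : finType) d (i : 'I_d) (P : pred T) :
  #|[set x : {ffun 'I_d -> T} | P (x i)]| = #|[set w | P w]| * #|T| ^ d.-1.
Proof.
pose F := fun j : 'I_d => if j == i then mem P else mem (@predT T).
have -> : [set x : {ffun 'I_d -> T} | P (x i)] = [set x | x \in family F].
  apply/setP => x; rewrite !inE; apply/idP/familyP.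
    move=> Hx j; rewrite /F; case: eqP => [->|] //.
  by move=> /(_ i); rewrite /F eqxx.
rewrite cardsE card_family foldrE big_map big_enum /=.
rewrite (bigD1 i) //= /F eqxx; congr (_ * _).
  by rewrite cardsE.
rewrite (eq_bigr (fun _ => #|T|)); last by move=> j /negbTE ->; rewrite cardT.
by rewrite prod_nat_const cardC1 card_ord.
Qed.

Local Open Scope ring_scope.

Definition inB (p c : nat) (s t : int) : bool := ((t - s ^+ 2) %% p%:Z)%Z < c%:Z.

Lemma inB_shift p c s t k1 k2 :
  inB p c (s + k1 * p%:Z) (t + k2 * p%:Z) = inB p c s t.
Proof.
rewrite /inB.
have -> : t + k2 * p%:Z - (s + k1 * p%:Z) ^+ 2 =
  (k2 - 2%:Z * s * k1 - k1 ^+ 2 * p%:Z) * p%:Z + (t - s ^+ 2).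
  by rewrite !expr2; ring.  
by rewrite modzMDl.
Qed.

Definition rz (q : nat) (x : int) : 'I_q.+1 := inord `|(x %% q.+1%:Z)%Z|%N.

Lemma rzE q x : ((rz q x : nat) : int) = (x %% q.+1%:Z)%Z.
Proof.
have h1 : 0 <= (x %% q.+1%:Z)%Z by apply: modz_ge0.
have h2 : (x %% q.+1%:Z)%Z < q.+1%:Z by apply: ltz_pmod.
rewrite /rz inordK ?gez0_abs //.
by rewrite -ltz_nat gez0_abs.
Qed.

Lemma rz_eq q x y : rz q x = rz q y -> (q.+1%:Z %| x - y)%Z.
Proof.
move=> /(congr1 (fun r : 'I_q.+1 => (r : nat) : int)); rewrite !rzE => E.
by rewrite -eqz_mod_dvd; apply/eqP.
Qed.

Lemma dvdz_prime p a b : prime p -> (p%:Z %| a * b)%Z -> (p%:Z %| a)%Z || (p%:Z %| b)%Z.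
Proof. by move=> Hp; rewrite !dvdzE abszM /= Euclid_dvdM. Qed.

Lemma dvdz_small p x : (p%:Z %| x)%Z -> (`|x| < p)%N -> x = 0.
Proof.
rewrite dvdzE /= => H1 H2.
case: (posnP `|x|%N) => [/eqP|Hx]; first by rewrite absz_eq0 => /eqP.
by have := dvdn_leq Hx H1; rewrite leqNgt H2.
Qed.

Lemma absz_lt (x : int) (p : nat) : - p%:Z < x < p%:Z -> (`|x| < p)%N.
Proof. by move=> H; rewrite -ltz_nat abszE ltr_norml. Qed.

Lemma rng_2 q : (2 < q.+1)%N -> - q.+1%:Z < 2 < q.+1%:Z.
Proof. move=> H. lia. Qed.
Lemma rng_dig q (a a' : int) :  0 <= a < q.+1%:Z -> 0 <= a' < q.+1%:Z -> - q.+1%:Z < a - a' < q.+1%:Z.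
Proof. move=> H1 H2. lia. Qed.
Lemma rng_ord q (u u' : 'I_q.+1) : - q.+1%:Z < (u : nat)%:Z - (u' : nat)%:Z < q.+1%:Z.
Proof. have hu := ltn_ord u; have hu' := ltn_ord u'. lia. Qed.
Lemma ord_dvd q (u u' : 'I_q.+1) : (q.+1%:Z %| (u : nat)%:Z - (u' : nat)%:Z)%Z -> u = u'.
Proof.
move=> D; have := dvdz_small D (absz_lt (rng_ord u u')).
move/eqP; rewrite subr_eq0 eqz_nat => /eqP Hv; exact: val_inj.
Qed.

Lemma W_inter q c (a a' b b' : int) : prime q.+1 -> (2 < q.+1)%N -> (c <= q.+1)%N ->
  0 <= a < q.+1%:Z -> 0 <= a' < q.+1%:Z -> a != a' ->
  (#|[set z : 'I_q.+1 * 'I_q.+1 | inB q.+1 c ((z.1 : nat)%:Z - a) ((z.2 : nat)%:Z - b)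
      && inB q.+1 c ((z.1 : nat)%:Z - a') ((z.2 : nat)%:Z - b')]| <= c * c)%N.
Proof.
move=> Hp H2 Hc Ha Ha' Hne.
set W := [set z | _].
pose g (z : 'I_q.+1 * 'I_q.+1) :=
  (rz q (((z.2 : nat)%:Z - b) - ((z.1 : nat)%:Z - a) ^+ 2),
   rz q (((z.2 : nat)%:Z - b') - ((z.1 : nat)%:Z - a') ^+ 2)).
have inj : {in W &, injective g}.
  move=> [u v] [u' v'] _ _ /= [E1 E2].
  have D1 := rz_eq E1; have D2 := rz_eq E2.
  have D3 : (q.+1%:Z %| (2%:Z * (a - a')) * ((u : nat)%:Z - (u' : nat)%:Z))%Z.
    have := rpredB D1 D2.
    congr (_ %| _)%Z; rewrite !expr2; ring.
  have Hu : u = u'.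
    case/orP: (dvdz_prime Hp D3) => [D4|D4]; last exact: ord_dvd.
    case/orP: (dvdz_prime Hp D4) => [D5|D5].
      by have := dvdz_small D5 (absz_lt (rng_2 H2)).
    have := dvdz_small D5 (absz_lt (rng_dig Ha Ha')).
    move/eqP; rewrite subr_eq0 => /eqP E.
    by move: Hne; rewrite E eqxx.
  subst u'; congr (_, _); apply: ord_dvd.
  move: D1.
  have -> : (v : nat)%:Z - b - ((u : nat)%:Z - a) ^+ 2 -
    ((v' : nat)%:Z - b - ((u : nat)%:Z - a) ^+ 2) = (v : nat)%:Z - (v' : nat)%:Z by ring.
  by [].
rewrite -(card_in_imset inj).
set R1 := [set r : 'I_q.+1 | (r < c)%N].
apply: (@leq_trans #|setX R1 R1|); last by rewrite cardsX card_R1.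
apply: subset_leq_card; apply/subsetP => _ /imsetP [z Hz ->].
move: Hz; rewrite !inE => /andP [H1 H3].
  by rewrite /g /= -!ltz_nat !rzE; apply/andP; split.
Qed.

Lemma W_lower q c (a b : int) : (c <= q.+1)%N ->
  (q.+1 * c <= #|[set z : 'I_q.+1 * 'I_q.+1 | inB q.+1 c ((z.1 : nat)%:Z - a) ((z.2 : nat)%:Z - b)]|)%N.
Proof.
move=> Hc.
set R1 := [set r : 'I_q.+1 | (r < c)%N].
have -> : (q.+1 * c = #|setX [set: 'I_q.+1] R1|)%N by rewrite cardsX cardsT card_ord card_R1.
pose h (z : 'I_q.+1 * 'I_q.+1) :=
  (z.1, rz q ((z.2 : nat)%:Z + b + ((z.1 : nat)%:Z - a) ^+ 2)).
have inj : {in setX [set: 'I_q.+1] R1 &, injective h}.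
  move=> [u r] [u' r'] _ _ [/= Hu E]; subst u'; congr (_, _).
  apply: ord_dvd; move: (rz_eq E).
  have -> : (r : nat)%:Z + b + ((u : nat)%:Z - a) ^+ 2 -
    ((r' : nat)%:Z + b + ((u : nat)%:Z - a) ^+ 2) = (r : nat)%:Z - (r' : nat)%:Z by ring.
  by [].
rewrite -(card_in_imset inj); apply: subset_leq_card; apply/subsetP => _ /imsetP [[u r] Hz ->].
move: Hz; rewrite !inE /= => Hr.
rewrite /inB rzE.
set Y := (r : nat)%:Z + b + ((u : nat)%:Z - a) ^+ 2.
have E := divz_eq Y q.+1%:Z.
have -> : (Y %% q.+1%:Z)%Z - b - ((u : nat)%:Z - a) ^+ 2 = (- (Y %/ q.+1%:Z)%Z) * q.+1%:Z + (r : nat)%:Z.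
  have -> : (Y %% q.+1%:Z)%Z = Y - (Y %/ q.+1%:Z)%Z * q.+1%:Z by rewrite {2}E; ring.
  rewrite /Y; ring.
rewrite modzMDl modz_small ?ltz_nat //.
by apply/andP; split => //; rewrite ltz_nat.
Qed.

Lemma W_upper q c : (c <= q.+1)%N ->
  (#|[set z : 'I_q.+1 * 'I_q.+1 | inB q.+1 c (z.1 : nat)%:Z (z.2 : nat)%:Z]| <= q.+1 * c)%N.
Proof.
move=> Hc.
set R1 := [set r : 'I_q.+1 | (r < c)%N].
have -> : (q.+1 * c = #|setX [set: 'I_q.+1] R1|)%N by rewrite cardsX cardsT card_ord card_R1.
pose h (z : 'I_q.+1 * 'I_q.+1) := (z.1, rz q ((z.2 : nat)%:Z - (z.1 : nat)%:Z ^+ 2)).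
set W := [set z | _].
have inj : {in W &, injective h}.
  move=> [u v] [u' v'] _ _ [/= Hu E]; subst u'; congr (_, _).
  apply: ord_dvd; move: (rz_eq E).
  have -> : (v : nat)%:Z - (u : nat)%:Z ^+ 2 - ((v' : nat)%:Z - (u : nat)%:Z ^+ 2)
     = (v : nat)%:Z - (v' : nat)%:Z by ring.
  by [].
rewrite -(card_in_imset inj); apply: subset_leq_card; apply/subsetP => _ /imsetP [[u v] Hz ->].
move: Hz; rewrite !inE /= /inB => Hr.
by rewrite -ltz_nat rzE.
Qed.

Lemma card_bigcup_le (I T : finType) (P : pred I) (F : I -> {set T}) :
  (#|\bigcup_(i | P i) F i| <= \sum_(i | P i) #|F i|)%N.
Proof.
apply: (big_ind2 (fun (X : {set T}) (n : nat) => #|X| <= n)%N) => //.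
  by rewrite cards0.
move=> X1 n1 X2 n2 H1 H2; apply: leq_trans (leq_card_setU _ _).1 _.
exact: leq_add.
Qed.

Definition lo q (w : nat) : 'I_q.+1 := inord (w %% q.+1).
Definition hi q (w : nat) : 'I_q.+1 := inord (w %/ q.+1).

Lemma loE q w : (lo q w : nat) = (w %% q.+1)%N.
Proof. by rewrite /lo inordK // ltnS -ltnS ltn_pmod. Qed.

Lemma hiE q w : (w < q.+1 * q.+1)%N -> (hi q w : nat) = (w %/ q.+1)%N.
Proof. by move=> H; rewrite /hi inordK // ltnS -ltnS ltn_divLR. Qed.

Lemma digE q w : (w < q.+1 * q.+1)%N -> w = (lo q w + q.+1 * hi q w)%N.
Proof. by move=> H; rewrite loE hiE // addnC mulnC -divn_eq. Qed.

Definition dec q (f : bool) (w : nat) : 'I_q.+1 * 'I_q.+1 :=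
  if f then (hi q w, lo q w) else (lo q w, hi q w).

Lemma card_dec q f (P : pred ('I_q.+1 * 'I_q.+1)) :
  #|[set w : 'I_(q.+1 * q.+1) | P (dec q f w)]| = #|[set z | P z]|.
Proof.
have inj : injective (fun w : 'I_(q.+1 * q.+1) => dec q f w).
  move=> w w' E; apply: ord_inj; rewrite (digE (ltn_ord w)) (digE (ltn_ord w')).
  by move: E; rewrite /dec; case: f => -[-> ->].
rewrite -(card_imset _ inj); apply: eq_card => z; rewrite [in RHS]inE.
apply/imsetP/idP.
  by case=> w; rewrite inE => Hw ->.
move=> Hz.
set s := (if f then z.2 else z.1); set t := (if f then z.1 else z.2).
have Hw : (s + q.+1 * t < q.+1 * q.+1)%N.
  have hs : (s < q.+1)%N by rewrite /s; case: (f).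
  have ht : (t < q.+1)%N by rewrite /t; case: (f).
  nia.
have Elo : lo q (s + q.+1 * t) = s.
  apply: ord_inj; rewrite loE /= addnC mulnC modnMDl modn_small //.
have Ehi : hi q (s + q.+1 * t) = t.
  apply: ord_inj; rewrite hiE //= addnC mulnC divnMDl // divn_small ?addn0 //.
  idtac.
have Ez : (if f then (t, s) else (s, t)) = z by rewrite /s /t; case: (f); case: z {Hz s t Hw Elo Ehi}.
have Ed : dec q f (Ordinal Hw) = z by rewrite /dec /= Elo Ehi -Ez; case: (f).
by exists (Ordinal Hw); rewrite ?inE Ed.
Qed.

Definition Sset q c d (i : 'I_d) (f : bool) (a : cube d (q.+1 * q.+1)) : {set cube d (q.+1 * q.+1)} :=
  [set x : cube d (q.+1 * q.+1) | inB q.+1 c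
     (((dec q f (x i)).1 : nat)%:Z - ((dec q f (a i)).1 : nat)%:Z)
     (((dec q f (x i)).2 : nat)%:Z - ((dec q f (a i)).2 : nat)%:Z)].

Lemma S_card q c d (i : 'I_d) (f : bool) (a : cube d (q.+1 * q.+1)) : (c <= q.+1)%N ->
  (q.+1 * c * (q.+1 * q.+1) ^ d.-1 <= #|@Sset q c d i f a|)%N.
Proof.
move=> Hc; rewrite /Sset.
rewrite (card_coord i (fun w : 'I_(q.+1 * q.+1) => inB q.+1 c
     (((dec q f w).1 : nat)%:Z - ((dec q f (a i)).1 : nat)%:Z)
     (((dec q f w).2 : nat)%:Z - ((dec q f (a i)).2 : nat)%:Z))).
rewrite card_ord leq_mul2r; apply/orP; right.
rewrite (@card_dec q f (fun z => inB q.+1 c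
     ((z.1 : nat)%:Z - ((dec q f (a i)).1 : nat)%:Z)
     ((z.2 : nat)%:Z - ((dec q f (a i)).2 : nat)%:Z))).
exact: W_lower.
Qed.

Lemma S_inter q c d (i : 'I_d) (f : bool) (a a' : cube d (q.+1 * q.+1)) :
  prime q.+1 -> (2 < q.+1)%N -> (c <= q.+1)%N ->
  (dec q f (a i)).1 != (dec q f (a' i)).1 ->
  (#|@Sset q c d i f a :&: @Sset q c d i f a'| <= c * c * (q.+1 * q.+1) ^ d.-1)%N.
Proof.
move=> Hp H2 Hc Hne.
pose P (w : 'I_(q.+1 * q.+1)) :=
  inB q.+1 c (((dec q f w).1 : nat)%:Z - ((dec q f (a i)).1 : nat)%:Z)
     (((dec q f w).2 : nat)%:Z - ((dec q f (a i)).2 : nat)%:Z)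
  && inB q.+1 c (((dec q f w).1 : nat)%:Z - ((dec q f (a' i)).1 : nat)%:Z)
     (((dec q f w).2 : nat)%:Z - ((dec q f (a' i)).2 : nat)%:Z).
have -> : @Sset q c d i f a :&: @Sset q c d i f a' = [set x : cube d _ | P (x i)].
  by apply/setP => x; rewrite !inE.
rewrite (card_coord i P) card_ord leq_mul2r; apply/orP; right.
rewrite (@card_dec q f (fun z => inB q.+1 c
     ((z.1 : nat)%:Z - ((dec q f (a i)).1 : nat)%:Z)
     ((z.2 : nat)%:Z - ((dec q f (a i)).2 : nat)%:Z)
  && inB q.+1 c ((z.1 : nat)%:Z - ((dec q f (a' i)).1 : nat)%:Z)
     ((z.2 : nat)%:Z - ((dec q f (a' i)).2 : nat)%:Z))).
apply: W_inter => //.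
- by rewrite ltz_nat ltn_ord andbT.
- by rewrite ltz_nat ltn_ord andbT.
Qed.

Definition comp q (f : bool) (z : 'I_q.+1 * 'I_q.+1) (e : bool * bool) : int :=
  let s := (z.1 : nat)%:Z - (e.1 : nat)%:Z * q.+1%:Z in
  let t := (z.2 : nat)%:Z - (e.2 : nat)%:Z * q.+1%:Z in
  if f then t + q.+1%:Z * s else s + q.+1%:Z * t.

Definition Vset q c (f : bool) : {set 'I_(2 * (q.+1 * q.+1))} :=
  [set w : 'I_(2 * (q.+1 * q.+1)) | [exists z : 'I_q.+1 * 'I_q.+1, exists e : bool * bool,
     inB q.+1 c (z.1 : nat)%:Z (z.2 : nat)%:Z &&
     ((w : nat)%:Z - (q.+1 * q.+1)%N%:Z == @comp q f z e)]].

Definition Bset q c d : {set scube d (q.+1 * q.+1)} :=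
  \bigcup_(i : 'I_d) \bigcup_(f : bool) [set b : scube d (q.+1 * q.+1) | b i \in Vset q c f].

Lemma V_card q c f : (c <= q.+1)%N -> (#|Vset q c f| <= q.+1 * c * 4)%N.
Proof.
move=> Hc.
have H0 : (0 < 2 * (q.+1 * q.+1))%N by rewrite !muln_gt0.
pose w0 := Ordinal H0.
pose k (ze : ('I_q.+1 * 'I_q.+1) * (bool * bool)) : 'I_(2 * (q.+1 * q.+1)) :=
  insubd w0 (absz (@comp q f ze.1 ze.2 + (q.+1 * q.+1)%N%:Z)).
set W := [set z : 'I_q.+1 * 'I_q.+1 | inB q.+1 c (z.1 : nat)%:Z (z.2 : nat)%:Z].
apply: (@leq_trans #|k @: setX W [set: bool * bool]|).
  apply: subset_leq_card; apply/subsetP => w; rewrite inE => /existsP [z /existsP [e /andP [Hz /eqP He]]].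
  apply/imsetP; exists (z, e); first by rewrite !inE Hz.
  apply: val_inj; rewrite /k /= val_insubd -He.
  have -> : (w : nat)%:Z - (q.+1 * q.+1)%N%:Z + (q.+1 * q.+1)%N%:Z = (w : nat)%:Z by ring.
  by rewrite absz_nat ltn_ord.
apply: leq_trans (leq_imset_card _ _) _.
by rewrite cardsX cardsT card_prod card_bool leq_mul2r W_upper.
Qed.

Lemma B_card q c d : (c <= q.+1)%N ->
  (#|Bset q c d| <= d * (2 * (q.+1 * c * 4 * (2 * (q.+1 * q.+1)) ^ d.-1)))%N.
Proof.
move=> Hc; rewrite /Bset.
apply: leq_trans (card_bigcup_le _ _) _.
rewrite -[X in (_ <= X * _)%N](card_ord d) -sum_nat_const; apply: leq_sum => i _.
apply: leq_trans (card_bigcup_le _ _) _.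
rewrite -[X in (_ <= X * _)%N]card_bool -sum_nat_const; apply: leq_sum => f _.
rewrite (card_coord i (fun w => w \in Vset q c f)) card_ord leq_mul2r.
apply/orP; right.
have -> : [set w | w \in Vset q c f] = Vset q c f by apply/setP => w; rewrite inE.
exact: V_card.
Qed.

Lemma rz_small q (x : int) : - q.+1%:Z < x < q.+1%:Z ->
  ((rz q x : nat) : int) = x + (nat_of_bool (x < 0)%R)%:Z * q.+1%:Z.
Proof.
move=> /andP [H1 H2]; rewrite rzE.
case: (ltrP x 0) => Hx /=.
  rewrite mul1r -(modzMDl 1) mul1r addrC modz_small //.
  apply/andP; split; lia.
by rewrite mul0r addr0 modz_small // Hx.
Qed.

Lemma dec_diff q (f : bool) (w w' : nat) : (w < q.+1 * q.+1)%N -> (w' < q.+1 * q.+1)%N ->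
  let d1 := ((dec q f w).1 : nat)%:Z - ((dec q f w').1 : nat)%:Z in
  let d2 := ((dec q f w).2 : nat)%:Z - ((dec q f w').2 : nat)%:Z in
  (if f then d2 + q.+1%:Z * d1 else d1 + q.+1%:Z * d2) = w%:Z - w'%:Z.
Proof.
move=> Hw Hw' d1 d2.
rewrite [in RHS](digE Hw) [in RHS](digE Hw') /d1 /d2 /dec.
case: (f) => /=; rewrite !PoszD !PoszM; ring.
Qed.

Lemma S_sub q c d (i : 'I_d) (f : bool) (A : {set cube d (q.+1 * q.+1)}) a :
  a \in A -> @Sset q c d i f a \subset sumset_cap_cube A (Bset q c d).
Proof.
move=> Ha; apply/subsetP => x; rewrite inE => Hx.
set m := (q.+1 * q.+1)%N.
have Hb : forall j : 'I_d, (x j + m - a j < 2 * m)%N.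
  move=> j; have := ltn_ord (x j); have := ltn_ord (a j); rewrite /m; lia.
pose b : scube d m := [ffun j => Ordinal (Hb j)].
have Hbv : forall j, scube_val b j = ((x j : nat) : int) - ((a j : nat) : int).
  move=> j; rewrite /scube_val /b ffunE /=.
  have := ltn_ord (a j); rewrite -/m => Haj.
  rewrite -subzn ?PoszD; [ring | by apply: leq_trans (ltnW Haj) (leq_addl _ _)].
set d1 := ((dec q f (x i)).1 : nat)%:Z - ((dec q f (a i)).1 : nat)%:Z in Hx.
set d2 := ((dec q f (x i)).2 : nat)%:Z - ((dec q f (a i)).2 : nat)%:Z in Hx.
have R1 : - q.+1%:Z < d1 < q.+1%:Z by apply: rng_ord.
have R2 : - q.+1%:Z < d2 < q.+1%:Z by apply: rng_ord.
pose z := (rz q d1, rz q d2).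
pose e := ((d1 < 0)%R, (d2 < 0)%R).
have Ez1 : ((z.1 : nat) : int) - (e.1 : nat)%:Z * q.+1%:Z = d1 by rewrite /= rz_small //; ring.
have Ez2 : ((z.2 : nat) : int) - (e.2 : nat)%:Z * q.+1%:Z = d2 by rewrite /= rz_small //; ring.
have Hb_in : b \in Bset q c d.
  apply/bigcupP; exists i => //; apply/bigcupP; exists f => //.
  rewrite inE inE; apply/existsP; exists z; apply/existsP; exists e; apply/andP; split.
    by rewrite /z /= !rz_small // inB_shift.
  apply/eqP.
  have -> : (b i : nat)%:Z - m%:Z = scube_val b i by [].
  rewrite Hbv /comp Ez1 Ez2.
  by rewrite -(dec_diff f (ltn_ord (x i)) (ltn_ord (a i))).
rewrite inE; apply/existsP; exists a; rewrite Ha /=; apply/existsP; exists b; rewrite Hb_in /=.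
by apply/forallP => j; rewrite Hbv; apply/eqP; ring.
Qed.

Lemma pigeon q d (A : {set cube d (q.+1 * q.+1)}) L : (0 < d)%N -> (0 < L)%N ->
  (L ^ (2 * d) <= #|A|)%N ->
  exists i : 'I_d, exists f : bool, (L <= #|[set (dec q f (a i)).1 | a : cube d (q.+1 * q.+1) in A]|)%N.
Proof.
move=> Hd HL0 HA.
case: (boolP [exists i : 'I_d, exists f : bool, L <= #|[set (dec q f (a i)).1 | a : cube d (q.+1 * q.+1) in A]|]%N).
  by move=> /existsP [i /existsP [f H]]; exists i, f.
rewrite negb_exists => /forallP Hall; exfalso.
have HL : forall (j : 'I_d * bool), (#|[set (dec q j.2 (a j.1)).1 | a : cube d (q.+1 * q.+1) in A]| <= L.-1)%N.
  move=> [i f]; have := Hall i; rewrite negb_exists => /forallP /(_ f).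
  by rewrite -ltnNge /= => H; rewrite -ltnS prednK.
pose phi (x : cube d (q.+1 * q.+1)) : {ffun 'I_d * bool -> 'I_q.+1} :=
  [ffun j => (dec q j.2 (x j.1)).1].
have inj : injective phi.
  move=> x x' E; apply/ffunP => i; apply: ord_inj.
  have E1 := congr1 (fun g : {ffun 'I_d * bool -> 'I_q.+1} => g (i, false)) E; have E2 := congr1 (fun g : {ffun 'I_d * bool -> 'I_q.+1} => g (i, true)) E.
  rewrite /phi !ffunE /= in E1 E2.
  by rewrite (digE (ltn_ord (x i))) (digE (ltn_ord (x' i))) E1 E2.
pose F := fun j : 'I_d * bool => mem [set (dec q j.2 (a j.1)).1 | a : cube d (q.+1 * q.+1) in A].
have sub : phi @: A \subset [set y | y \in family F].
  apply/subsetP => _ /imsetP [x Hx ->]; rewrite inE; apply/familyP => j.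
  by rewrite /F /phi ffunE; apply/imsetP; exists x.
have := subset_leq_card sub; rewrite card_imset // cardsE card_family foldrE big_map big_enum /=.
move=> H1.
have H2 : (\prod_(j : 'I_d * bool) #|F j| <= L.-1 ^ (2 * d))%N.
  apply: leq_trans (leq_prod (fun j _ => _ : #|F j| <= L.-1)%N) _.
    by move=> j _; exact: HL.
  by rewrite prod_nat_const card_prod card_ord card_bool mulnC.
have H3 : (L.-1 ^ (2 * d) < L ^ (2 * d))%N.
  rewrite ltn_exp2r ?muln_gt0 ?Hd //.
  by case: L HL0 {HA HL H1 H2 Hall}.
have := leq_trans HA (leq_trans H1 H2); by rewrite leqNgt H3.
Qed.

Lemma cover_nat q c d L (A : {set cube d (q.+1 * q.+1)}) :
  prime q.+1 -> (2 < q.+1)%N -> (c <= q.+1)%N -> (0 < d)%N -> (0 < L)%N ->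
  (L ^ (2 * d) <= #|A|)%N ->
  exists L', (L <= L')%N /\
   ((L' * (q.+1 * c * (q.+1 * q.+1) ^ d.-1)) ^ 2 <=
    #|sumset_cap_cube A (Bset q c d)| *
      (L' * (q.+1 * c * (q.+1 * q.+1) ^ d.-1) + L' ^ 2 * (c * c * (q.+1 * q.+1) ^ d.-1)))%N.
Proof.
move=> Hp H2 Hc Hd HL HA.
have [i [f HV]] := pigeon Hd HL HA.
set V := [set (dec q f (a i)).1 | a : cube d (q.+1 * q.+1) in A] in HV.
have : (0 < #|A|)%N by apply: leq_trans HA; rewrite expn_gt0 HL.
case/card_gt0P => a0 Ha0.
pose rep (v : 'I_q.+1) := odflt a0 [pick a in A | (dec q f (a i)).1 == v].
have Hrep : forall v, v \in V -> rep v \in A /\ (dec q f (rep v i)).1 = v.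
  move=> v /imsetP [a Ha ->]; rewrite /rep.
  case: pickP => [a' /andP [Ha' /eqP E] | H] //=.
  by have := H a; rewrite Ha eqxx.
exists #|V|; split => //.
have := @cs_cover _ _ V (fun v => @Sset q c d i f (rep v)) (q.+1 * c * (q.+1 * q.+1) ^ d.-1)
  (c * c * (q.+1 * q.+1) ^ d.-1).
have Hi : forall v w, v \in V -> w \in V -> v != w ->
   (#|@Sset q c d i f (rep v) :&: @Sset q c d i f (rep w)| <= c * c * (q.+1 * q.+1) ^ d.-1)%N.
  move=> v w Hv Hw Hne; apply: S_inter => //.
  by have [_ ->] := Hrep v Hv; have [_ ->] := Hrep w Hw.
move=> /(_ (fun v _ => S_card _ _ _ Hc) Hi) H; apply: leq_trans H _; rewrite leq_mul2r; apply/orP; right.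
apply: subset_leq_card; apply/bigcupsP => v Hv.
by have [Hr _] := Hrep v Hv; apply: S_sub.
Qed.

Lemma alg2 (L p c M U : nat) : (0 < L * c * M)%N ->
  ((L * (p * c * M)) ^ 2 <= U * (L * (p * c * M) + L ^ 2 * (c * c * M)))%N ->
  (L * c * (p * p * M) <= U * (p + L * c))%N.
Proof.
move=> Hpos H.
have E1 : ((L * (p * c * M)) ^ 2 = (L * c * M) * (L * c * (p * p * M)))%N by ring.
have E2 : (U * (L * (p * c * M) + L ^ 2 * (c * c * M)) = (L * c * M) * (U * (p + L * c)))%N by ring.
by move: H; rewrite E1 E2 leq_pmul2l.
Qed.

Theorem corollary4p5 (R : realType) (d : nat) (eta eps : R) :
  (1 <= d)%N ->
  (0 < eta)%R -> (eta <= 1 / 3)%R ->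
  (0 < eps)%R -> (eps <= 1 / 3)%R ->
  exists N : nat,
    forall M : nat, exists m : nat, (M < m)%N /\
      exists B : {set scube d m},
        (#|B|%:R <= eta * (m ^ d)%:R)%R /\
        forall A : {set cube d m}, (N <= #|A|)%N ->
          ((1 - eps) * (m ^ d)%:R <= #|sumset_cap_cube A B|%:R)%R.
Proof.
move=> Hd He0 He3 Hp0 Hp3.
pose K : nat := (8 * d * 2 ^ d.-1)%N.
have K0 : (0 < K)%N by rewrite /K !muln_gt0 Hd expn_gt0.
have Kr0 : (0 : R) < K%:R by rewrite ltr0n.
have Kr1 : (1 : R) <= K%:R by rewrite ler1n.
pose L : nat := (Num.Def.trunc (2 * K%:R / (eta * eps))).+1.
have HL : 2 * K%:R < L%:R * (eta * eps).
  by rewrite -ltr_pdivrMr ?mulr_gt0 //; exact: truncnS_gt.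
have L0 : (0 < L)%N by [].
pose P0 : nat := (Num.Def.trunc (2 * K%:R / eta)).+1.
have HP0 : 2 * K%:R < P0%:R * eta by rewrite -ltr_pdivrMr //; exact: truncnS_gt.
exists (L ^ (2 * d))%N => M.
have [p Mp Pp] := prime_above (maxn M (maxn P0 2)).
move: Mp; rewrite !gtn_max => /and3P [pM pP0 p2].
case: p Pp pM pP0 p2 => [//|q] Pp pM pP0 p2.
pose c := Num.Def.trunc (eta * q.+1%:R / K%:R).
have hx0 : 0 <= eta * q.+1%:R / K%:R.
  by rewrite divr_ge0 // mulr_ge0 // ltW.
have Hc1 : c%:R * K%:R <= eta * q.+1%:R by rewrite -ler_pdivlMr // truncn_le hx0.
have Hc2 : eta * q.+1%:R < c.+1%:R * K%:R by rewrite -ltr_pdivrMr //; exact: truncnS_gt.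
have Hpr : P0%:R * eta < q.+1%:R * eta by rewrite ltr_pM2r // ltr_nat.
have HpK : 2 * K%:R < eta * q.+1%:R by lra.
have c2 : (2 < c.+1)%N.
  rewrite -(ltr_nat R); rewrite -(ltr_pM2r Kr0); lra.
have c0 : (0 < c)%N by rewrite ltnS in c2; exact: leq_trans _ c2.
have Hcp : (c <= q.+1)%N.
  rewrite -(ler_nat R).
  have hc0 : (0 : R) <= c%:R by [].
  have hp0 : (0 : R) <= q.+1%:R by [].
  nra.
exists (q.+1 * q.+1)%N; split.
  by apply: leq_trans pM _; rewrite leq_pmulr.
have Hmd : ((q.+1 * q.+1) ^ d = q.+1 * q.+1 * (q.+1 * q.+1) ^ d.-1)%N.
  by rewrite -expnS prednK.
exists (Bset q c d); split.
  have HB := B_card d Hcp.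
  have E : (d * (2 * (q.+1 * c * 4 * (2 * (q.+1 * q.+1)) ^ d.-1)) =
      K * c * q.+1 * (q.+1 * q.+1) ^ d.-1)%N.
    by rewrite expnMn /K; ring.
  rewrite E in HB; move: HB; rewrite -(ler_nat R) => HB; apply: le_trans HB _.
  rewrite Hmd !natrM.
  set Mm := ((q.+1 * q.+1) ^ d.-1)%:R : R.
  have hM : 0 <= Mm by [].
  have hp0 : (0 : R) <= q.+1%:R by [].
  have h := ler_wpM2r (mulr_ge0 hp0 hM) Hc1.
  move: h; rewrite /K !natrM => h; lra.
move=> A HA.
have [L' [HLL' Hcov]] := cover_nat Pp p2 Hcp Hd L0 HA.
have Hpos : (0 < L' * c * (q.+1 * q.+1) ^ d.-1)%N.
  have L'0 : (0 < L')%N := leq_trans L0 HLL'.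
  by rewrite !muln_gt0 L'0 c0 expn_gt0.
have H2 := alg2 Hpos Hcov.
rewrite -Hmd in H2.
move: H2; rewrite -(ler_nat R) !natrM natrD natrM => H2.
set X := ((q.+1 * q.+1) ^ d)%:R : R in H2 *.
set U := #|sumset_cap_cube A (Bset q c d)|%:R : R in H2 *.
set pr := q.+1%:R : R in H2 Hc2 HpK *.
have hX : 0 <= X by [].
have hp0 : 0 < pr by [].
have hc0 : (1 : R) <= c%:R by rewrite ler1n.
have hLL : L%:R <= L'%:R :> R by rewrite ler_nat.
have hL0 : (0 : R) <= L%:R by [].
have h3 : 2 * K%:R * c%:R < L%:R * (eta * eps) * c%:R by rewrite ltr_pM2r // ltr0n.
have h4 : L%:R * (eta * eps) * c%:R <= L'%:R * (eta * eps) * c%:R.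
  by rewrite ler_pM2r ?ltr0n // ler_pM2r ?mulr_gt0.
have h5 : eta * pr < eta * (eps * (L'%:R * c%:R)).
  have : c.+1%:R * K%:R <= 2 * K%:R * c%:R :> R.
    rewrite -natr1; nra.
  move=> h6; lra.
have h7 : pr <= eps * (L'%:R * c%:R) by rewrite ltW // -(ltr_pM2l He0).
set Y := L'%:R * c%:R in H2 h7.
have hY : 0 <= Y by rewrite mulr_ge0.
have h8 : (1 - eps) * X * (pr + Y) <= U * (pr + Y).
  apply: le_trans H2.
  have : (1 - eps) * (pr + Y) <= Y by nra.
  move=> h9; have := ler_wpM2r hX h9; lra.
by rewrite ler_pM2r // in h8; lra.
Qed.
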